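(* Let $d\ge 1$ and $h\ge 1$ be integers, let $T$ be the complete $d$-ary tree of height $h$, and let $u,v$ be vertices of $T$ with least common ancestor $c$. Let $u'$, $v'$, $c'$ be the distances of $u$, $v$, $c$ respectively from the root. Then the hitting time from $u$ to $v$ is \[f_{h-c'}(d)-f_{h-u'}(d)+g_{h,v'}(d)-g_{h,c'}(d).\]
   Context: The complete $d$-ary tree of height $h$ is the rooted tree in which every vertex at depth less than $h$ has exactly $d$ children and every vertex at depth $h$ is a leaf. For nonnegative integers $n$, $f_0(d)=0$ and for $n\ge1$, $f_n(d)=\left(\sum_{i=0}^{n-1}(2n-2i)d^i\right)-n$. For a positive integer $k$ and nonnegative integer $m$, $g_{k,0}(d)=0$ and for $m\ge1$, $g_{k,m}(d)=\left(\sum_{i=0}^{m-1}(2m-2i)d^{k-i}\right)-m$. A simple random walk moves at each step to a uniformly random neighbor; the hitting time from $x$ to $y$ is the expected number of steps for a simple random walk started at $x$ to first reach $y$. *)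

(* Defs.v *)
From Stdlib Require Import Reals List Arith.
From Coquelicot Require Import Coquelicot.
Import ListNotations.
Open Scope R_scope.

(* Vertices of the complete d-ary tree of height h are encoded as the words
   (lists) of child indices read from the root: the root is [], and the
   children of x are x ++ [i] for i < d (only when length x < h). *)
Definition is_vertex (d h : nat) (x : list nat) : Prop :=
  (length x <= h)%nat /\ List.Forall (fun i => (i < d)%nat) x.

Definition children (d h : nat) (x : list nat) : list (list nat) :=
  if Nat.ltb (length x) h then map (fun i => x ++ [i]) (List.seq 0 d) else [].

Definition parent_list (x : list nat) : list (list nat) :=
  match x with [] => [] | _ :: _ => [removelast x] end.

Definition nbrs (d h : nat) (x : list nat) : list (list nat) :=
  parent_list x ++ children d h x.

Definition deg (d h : nat) (x : list nat) : nat := length (nbrs d h x).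

Definition vdec := list_eq_dec Nat.eq_dec.

(* hit_prob d h y t x = probability that the simple random walk started at x
   first reaches y at exactly step t (first-step decomposition of the
   walk: from x <> y, move to a uniformly random neighbour). *)
Fixpoint hit_prob (d h : nat) (y : list nat) (t : nat) (x : list nat) : R :=
  match t with
  | O => if vdec x y then 1 else 0
  | S t' => if vdec x y then 0
            else / INR (deg d h x) *
                 fold_right Rplus 0 (map (hit_prob d h y t') (nbrs d h x))
  end.

(* H is the hitting time from x to y: the expected value of the first hitting
   time, i.e. the (convergent) sum  sum_t t * P(tau_y = t). *)
Definition is_hitting_time (d h : nat) (x y : list nat) (H : R) : Prop :=
  is_series (fun t => INR t * hit_prob d h y t x) H.

Fixpoint lca (x y : list nat) : list nat :=
  match x, y with
  | a :: x', b :: y' => if Nat.eq_dec a b then a :: lca x' y' else []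
  | _, _ => []
  end.

Definition sumR (l : list R) : R := fold_right Rplus 0 l.

Definition f_poly (n : nat) (d : R) : R :=
  match n with
  | O => 0
  | S _ => sumR (map (fun i => (2 * INR n - 2 * INR i) * d ^ i) (List.seq 0 n)) - INR n
  end.

Definition g_poly (k m : nat) (d : R) : R :=
  match m with
  | O => 0
  | S _ => sumR (map (fun i => (2 * INR m - 2 * INR i) * d ^ (k - i)) (List.seq 0 m)) - INR m
  end.

(* Main.v *)
Require Import Defs.
From Stdlib Require Import Reals List Arith.
From Coquelicot Require Import Coquelicot.
From Stdlib Require Import Lia Lra.
Import ListNotations.
Open Scope R_scope.

Fixpoint isprefix (x v : list nat) : bool :=
  match x, v with
  | [], _ => true
  | a :: x', b :: v' => Nat.eqb a b && isprefix x' v'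
  | _ :: _, [] => false
  end.

Lemma lca_len_l x v : (length (lca x v) <= length x)%nat.
Proof. revert v; induction x as [|a x IH]; intros [|b v]; simpl; try lia.
  destruct (Nat.eq_dec a b); simpl; [specialize (IH v); lia | lia]. Qed.

Lemma lca_len_r x v : (length (lca x v) <= length v)%nat.
Proof. revert v; induction x as [|a x IH]; intros [|b v]; simpl; try lia.
  destruct (Nat.eq_dec a b); simpl; [specialize (IH v); lia | lia]. Qed.

Lemma prefix_lca x v : isprefix x v = true -> lca x v = x.
Proof. revert v; induction x as [|a x IH]; intros [|b v]; simpl; try easy.
  intros H; apply andb_prop in H as [H1 H2]. apply Nat.eqb_eq in H1; subst.
  destruct (Nat.eq_dec b b); [|easy]. now rewrite IH. Qed.

Lemma nprefix_lca x v : isprefix x v = false -> (length (lca x v) < length x)%nat.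
Proof. revert v; induction x as [|a x IH]; intros [|b v]; simpl; try easy; try lia.
  intros H. destruct (Nat.eq_dec a b).
  - subst. rewrite Nat.eqb_refl in H. simpl in H. specialize (IH v H). simpl; lia.
  - simpl; lia. Qed.

Lemma prefix_len x v : isprefix x v = true -> (length x <= length v)%nat.
Proof. revert v; induction x as [|a x IH]; intros [|b v]; simpl; try easy; try lia.
  intros H; apply andb_prop in H as [_ H2]. specialize (IH _ H2); lia. Qed.

Lemma isprefix_eq x v : isprefix x v = true -> length x = length v -> x = v.
Proof. revert v; induction x as [|a x IH]; intros [|b v]; simpl; try easy.
  intros H E; apply andb_prop in H as [H1 H2]. apply Nat.eqb_eq in H1; subst.
  f_equal; auto. Qed.

Lemma prefix_refl v : isprefix v v = true.
Proof. induction v; simpl; auto. now rewrite Nat.eqb_refl. Qed.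

Lemma prefix_app x i v : isprefix (x ++ [i]) v = true -> isprefix x v = true.
Proof. revert v; induction x as [|a x IH]; intros [|b v]; simpl; try easy.
  intros H; apply andb_prop in H as [H1 H2]. rewrite H1; simpl; auto. Qed.

Lemma prefix_app_eq x i v : isprefix x v = true -> (length x < length v)%nat ->
  isprefix (x ++ [i]) v = Nat.eqb i (nth (length x) v 0%nat).
Proof. revert v; induction x as [|a x IH]; intros [|b v]; simpl; try easy; try lia.
  - intros _ _. now rewrite Bool.andb_true_r.
  - intros H L; apply andb_prop in H as [H1 H2]. rewrite H1; simpl. apply IH; auto; lia. Qed.

Lemma lca_app x i v : lca (x ++ [i]) v = if isprefix (x ++ [i]) v then x ++ [i] else lca x v.
Proof. revert v; induction x as [|a x IH]; intros [|b v]; simpl; try easy.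
  - destruct (Nat.eq_dec i b); subst. now rewrite Nat.eqb_refl.
    apply Nat.eqb_neq in n; now rewrite n.
  - destruct (Nat.eq_dec a b).
    + subst. rewrite Nat.eqb_refl; simpl. rewrite IH. now destruct isprefix.
    + apply Nat.eqb_neq in n as n'; now rewrite n'. Qed.

Lemma sumR_app l1 l2 : sumR (l1 ++ l2) = sumR l1 + sumR l2.
Proof. induction l1; simpl; [lra|]. unfold sumR in *; simpl. rewrite IHl1; lra. Qed.

Lemma sumR_map_ext {A} (f g : A -> R) l : (forall x, In x l -> f x = g x) -> sumR (map f l) = sumR (map g l).
Proof. intros H; f_equal; apply map_ext_in; auto. Qed.

Lemma sumR_map_plus {A} (f g : A -> R) l : sumR (map (fun x => f x + g x) l) = sumR (map f l) + sumR (map g l).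
Proof. induction l; unfold sumR in *; simpl; [lra|]. rewrite IHl; lra. Qed.

Lemma sumR_map_scal {A} (f : A -> R) c l : sumR (map (fun x => c * f x) l) = c * sumR (map f l).
Proof. induction l; unfold sumR in *; simpl; [lra|]. rewrite IHl; lra. Qed.

Lemma sumR_map_const {A} c (l : list A) : sumR (map (fun _ => c) l) = INR (length l) * c.
Proof. induction l; [unfold sumR; simpl; lra|]. change (length (a :: l)) with (S (length l)).
  rewrite S_INR. unfold sumR in *; simpl. rewrite IHl; lra. Qed.

Lemma sumR_map_le {A} (f g : A -> R) l : (forall x, In x l -> f x <= g x) -> sumR (map f l) <= sumR (map g l).
Proof. induction l; unfold sumR in *; simpl; intros H; [lra|].
  assert (f a <= g a) by auto. assert (fold_right Rplus 0 (map f l) <= fold_right Rplus 0 (map g l)) by auto. lra. Qed.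

Fixpoint psum (c : nat -> R) (n : nat) : R :=
  match n with O => 0 | S n' => psum c n' + c n' end.

Definition Q (c : nat -> R) (n : nat) : R :=
  sumR (map (fun i => (2 * INR n - 2 * INR i) * c i) (List.seq 0 n)) - INR n.

Lemma sumR_seq_psum c n : sumR (map c (List.seq 0 n)) = psum c n.
Proof. induction n; [reflexivity|]. rewrite seq_S, map_app, sumR_app, IHn. simpl.
  unfold sumR; simpl; lra. Qed.

Lemma Q_S c n : Q c (S n) = Q c n + 2 * psum c (S n) - 1.
Proof. unfold Q. rewrite seq_S, map_app, sumR_app.
  rewrite (sumR_map_ext _ (fun i => (2 * INR n - 2 * INR i) * c i + 2 * c i)).
  2:{ intros x _. rewrite S_INR; ring. }
  rewrite sumR_map_plus, sumR_map_scal, !sumR_seq_psum. simpl psum.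
  rewrite S_INR. unfold sumR; simpl. ring. Qed.

Lemma Q_0 c : Q c 0 = 0.
Proof. unfold Q; simpl. unfold sumR; simpl; lra. Qed.

Lemma psum_ge c n : (forall i, 1 <= c i) -> INR n <= psum c n.
Proof. intros H; induction n; [simpl; lra|]. rewrite S_INR. simpl psum. specialize (H n); lra. Qed.

Lemma Q_mono c m n : (forall i, 1 <= c i) -> (m <= n)%nat -> Q c m <= Q c n.
Proof. intros H L; induction L; [lra|]. rewrite Q_S.
  pose proof (psum_ge c (S m0) H). rewrite S_INR in H0. pose proof (pos_INR m0). lra. Qed.

Lemma Q_nonneg c n : (forall i, 1 <= c i) -> 0 <= Q c n.
Proof. intros H; rewrite <- (Q_0 c). apply Q_mono; auto; lia. Qed.

Lemma f_Q n d : f_poly n d = Q (fun i => d ^ i) n.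
Proof. destruct n; [now rewrite Q_0|reflexivity]. Qed.

Lemma g_Q k m d : g_poly k m d = Q (fun i => d ^ (k - i)) m.
Proof. destruct m; [now rewrite Q_0|reflexivity]. Qed.

Lemma geom d n : (d - 1) * psum (fun i => d ^ i) n = d ^ n - 1.
Proof. induction n; simpl; [lra|]. rewrite Rmult_plus_distr_l, IHn. ring. Qed.

Definition avg d h (f : list nat -> R) x := / INR (deg d h x) * sumR (map f (nbrs d h x)).

Definition HL d h (v : list nat) (L k : nat) : R :=
  Q (fun i => INR d ^ i) (h - L) - Q (fun i => INR d ^ i) (h - k)
  + Q (fun i => INR d ^ (h - i)) (length v) - Q (fun i => INR d ^ (h - i)) L.

Definition Hfun d h v x := HL d h v (length (lca x v)) (length x).

Lemma parent_app p a : parent_list (p ++ [a]) = [p].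
Proof. unfold parent_list. destruct (p ++ [a]) eqn:E; [now destruct p|]. rewrite <- E, removelast_last; reflexivity. Qed.

Lemma sum_if b d A1 A2 : (b < d)%nat ->
  sumR (map (fun i => if Nat.eqb i b then A1 else A2) (List.seq 0 d)) = A1 + (INR d - 1) * A2.
Proof. induction d; intros Hb; [lia|]. rewrite seq_S, map_app, sumR_app, S_INR. cbn [Nat.add map].
  destruct (Nat.eq_dec b d).
  - subst. rewrite Nat.eqb_refl.
    rewrite (sumR_map_ext _ (fun _ => A2)). 2:{ intros x Hx. apply in_seq in Hx.
      destruct (Nat.eqb_spec x d); [lia|reflexivity]. }
    rewrite sumR_map_const, length_seq. unfold sumR; simpl; ring.
  - rewrite IHd by lia. destruct (Nat.eqb_spec d b); [lia|]. unfold sumR; simpl; ring. Qed.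

Lemma harm d h v x : (1 <= d)%nat -> (1 <= h)%nat -> is_vertex d h v -> is_vertex d h x -> x <> v ->
  INR (deg d h x) * (Hfun d h v x - 1) = sumR (map (Hfun d h v) (nbrs d h x)).
Proof.
  intros Hd Hh [Lv Fv] [Lx Fx] Hxv.
  assert (Ed : 1 <= INR d) by (apply (le_INR 1); lia).
  set (F := Q (fun i => INR d ^ i)).
  set (G := Q (fun i => INR d ^ (h - i))).
  assert (FS : forall j, F (S j) = F j + 2 * psum (fun i => INR d ^ i) (S j) - 1) by (intros; apply Q_S).
  assert (GS : forall j, G (S j) = G j + 2 * psum (fun i => INR d ^ (h - i)) (S j) - 1) by (intros; apply Q_S).
  assert (GE : forall j, (INR d - 1) * psum (fun i => INR d ^ i) j = INR d ^ j - 1) by (intros; apply geom).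
  unfold deg, nbrs, children.
  destruct (isprefix x v) eqn:Px.
  -
    assert (Lxv := prefix_len _ _ Px).
    assert (Kv : (length x < length v)%nat).
    { destruct (Nat.eq_dec (length x) (length v)); [|lia]. exfalso; apply Hxv, isprefix_eq; auto. }
    set (b := nth (length x) v 0%nat).
    assert (Hb : (b < d)%nat).
    { unfold b. rewrite Forall_forall in Fv. apply Fv, nth_In; lia. }
    assert (Lt : Nat.ltb (length x) h = true) by (apply Nat.ltb_lt; lia).
    rewrite Lt, map_app, map_map, List.length_app, length_map, length_seq, sumR_app.
    rewrite (sumR_map_ext _ (fun i => if Nat.eqb i b then HL d h v (S (length x)) (S (length x))
                                      else HL d h v (length x) (S (length x)))).
    2:{ intros i _. unfold Hfun. rewrite lca_app, (prefix_app_eq _ _ _ Px Kv). fold b.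
        rewrite List.length_app; simpl. rewrite Nat.add_1_r.
        destruct (Nat.eqb i b); [rewrite List.length_app; simpl; rewrite Nat.add_1_r; reflexivity|].
        rewrite prefix_lca; auto. }
    rewrite sum_if by auto.
    unfold Hfun. rewrite (prefix_lca _ _ Px).
    destruct (h - length x)%nat as [|j] eqn:Ej; [lia|].
    assert (Ej' : (h - S (length x))%nat = j) by lia.
    assert (Eh : (h - length x = S j)%nat) by lia.
    destruct x as [|a x'] using rev_ind.
    + simpl length in *. simpl parent_list. unfold sumR at 1; simpl. rewrite Rplus_0_l.
      unfold HL. fold F G. rewrite Ej', Eh, (GS 0%nat), FS. simpl psum.
      rewrite Nat.sub_0_r. rewrite Nat.sub_0_r in Eh. rewrite Eh.
      specialize (GE (S j)). assert (G0 : G 0%nat = 0) by apply Q_0. simpl psum in *. simpl pow in *. lra.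
    + clear IHx'. rewrite parent_app. change (length [x'] + d)%nat with (S d). rewrite S_INR.
      unfold sumR at 1; cbn [map fold_right].
      assert (Pp : isprefix x' v = true) by (eapply prefix_app; eauto).
      rewrite (prefix_lca _ _ Pp). rewrite List.length_app in *. simpl length in *.
      rewrite Nat.add_1_r in *.
      unfold HL. fold F G. rewrite Ej', Eh, (GS (S (length x'))), (GS (length x')), FS.
      simpl psum. rewrite Eh. specialize (GE (S j)). simpl psum in *. simpl pow in *. lra.
  -
    assert (NL := nprefix_lca _ _ Px).
    destruct x as [|a p] using rev_ind; [simpl in Px; discriminate|]. clear IHp.
    rewrite parent_app.
    assert (Lp : lca (p ++ [a]) v = lca p v) by (rewrite lca_app, Px; reflexivity).
    set (x := p ++ [a]) in *.
    assert (Cx : forall i, lca (x ++ [i]) v = lca x v).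
    { intros i. rewrite lca_app. destruct (isprefix (x ++ [i]) v) eqn:E; [|reflexivity].
      apply prefix_app in E. congruence. }
    assert (Lx' : length x = S (length p)) by (unfold x; rewrite List.length_app; simpl; lia).
    rewrite map_app, sumR_app. unfold sumR at 1; cbn [map fold_right]. unfold Hfun at 1. rewrite Lp.
    rewrite List.length_app. change (length [p]) with 1%nat.
    destruct (Nat.ltb (length x) h) eqn:Lt.
    + apply Nat.ltb_lt in Lt.
      rewrite map_map, length_map, length_seq.
      rewrite (sumR_map_ext _ (fun _ => HL d h v (length (lca p v)) (S (length x)))).
      2:{ intros i _. unfold Hfun. rewrite Cx, List.length_app. simpl. rewrite Nat.add_1_r. rewrite Lp; reflexivity. }
      rewrite sumR_map_const, length_seq. rewrite Nat.add_1_l, S_INR.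
      rewrite Lx'.
      destruct (ex_intro (fun j => (h - S (S (length p)))%nat = j) _ eq_refl) as [j E0].
      assert (E1 : (h - S (length p) = S j)%nat) by lia.
      assert (E2 : (h - length p = S (S j))%nat) by lia.
      unfold Hfun, HL. fold F G. rewrite E0, E1, E2, (FS (S j)), (FS j).
      specialize (GE (S j)). simpl psum in *. simpl pow in *. lra.
    + apply Nat.ltb_ge in Lt. rewrite Lx' in *. cbn [length]. rewrite Nat.add_0_r.
      change (sumR (map (Hfun d h v) [])) with 0.
      assert (E1 : (h - S (length p) = 0)%nat) by lia.
      assert (E2 : (h - length p = 1)%nat) by lia.
      unfold Hfun, HL. fold F G. rewrite E1, E2, (FS 0%nat). assert (F0 : F 0%nat = 0) by apply Q_0.
      simpl psum. simpl INR. lra.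
Qed.

Lemma anal (a k : nat -> R) (Bv M : R) :
  (forall n, 0 <= a n) -> (forall n, a (S n) <= a n) ->
  (forall T, Bv = psum a T + k T) -> (forall T, 0 <= k T) ->
  (forall T, k (S T) <= M * a T) -> 0 <= M ->
  forall eps, eps > 0 -> exists N, forall T, (T >= N)%nat ->
    Rdist (psum a T - INR T * a T) Bv < eps.
Proof.
  intros a0 adec Hk k0 kM M0 eps Heps.
  assert (amono : forall m n, (m <= n)%nat -> a n <= a m).
  { intros m n L; induction L; [lra|]. specialize (adec m0); lra. }
  assert (Ta : forall T, INR T * a T <= psum a T).
  { induction T; simpl psum; [simpl; lra|]. rewrite S_INR. specialize (adec T). specialize (a0 T).
    assert (INR T * a (S T) <= INR T * a T) by (apply Rmult_le_compat_l; [apply pos_INR|lra]). lra. }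
  assert (tail : forall N j, INR j * a (N + j)%nat <= psum a (N + j) - psum a N).
  { intros N; induction j; [rewrite Nat.add_0_r; simpl; lra|].
    rewrite Nat.add_succ_r, S_INR. simpl psum. specialize (adec (N + j)%nat). specialize (a0 (N+j)%nat).
    assert (INR j * a (S (N+j)) <= INR j * a (N + j)%nat) by (apply Rmult_le_compat_l; [apply pos_INR|lra]). lra. }
  assert (B0 : 0 <= Bv) by (rewrite (Hk 0%nat); simpl; specialize (k0 0%nat); lra).
  destruct (INR_archimed eps (3 * M * Bv) Heps) as [n Hn].
  set (K := S n).
  assert (HK : INR K * eps > 3 * M * Bv).
  { unfold K; rewrite S_INR. lra. }
  exists (2 * S K)%nat. intros T HT.
  assert (aK : INR K * a K <= Bv) by (specialize (Ta K); specialize (Hk K); specialize (k0 K); lra).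
  destruct T as [|T']; [lia|].
  assert (k1 : INR K * k (S T') <= M * Bv).
  { specialize (kM T'). assert (a T' <= a K) by (apply amono; lia).
    assert (INR K * k (S T') <= INR K * (M * a K)).
    { apply Rmult_le_compat_l; [apply pos_INR|]. specialize (a0 K).
      assert (M * a T' <= M * a K) by (apply Rmult_le_compat_l; lra). lra. }
    assert (INR K * (M * a K) = M * (INR K * a K)) by ring.
    assert (M * (INR K * a K) <= M * Bv) by (apply Rmult_le_compat_l; lra). lra. }
  assert (k2 : INR K * (INR (S T' - S K) * a (S T')) <= M * Bv).
  { specialize (tail (S K) (S T' - S K)%nat). replace (S K + (S T' - S K))%nat with (S T') in tail by lia.
    assert (psum a (S T') <= Bv) by (specialize (Hk (S T')); specialize (k0 (S T')); lra).
    assert (k (S K) <= M * a K) by apply kM.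
    pose proof (Hk (S K)).
    assert (INR (S T' - S K) * a (S T') <= M * a K) by lra.
    assert (INR K * (INR (S T' - S K) * a (S T')) <= INR K * (M * a K)) by (apply Rmult_le_compat_l; [apply pos_INR|lra]).
    assert (INR K * (M * a K) = M * (INR K * a K)) by ring.
    assert (M * (INR K * a K) <= M * Bv) by (apply Rmult_le_compat_l; lra). lra. }
  assert (Tle : INR (S T') <= 2 * INR (S T' - S K)).
  { replace 2 with (INR 2) by (simpl; lra). rewrite <- mult_INR. apply le_INR. lia. }
  assert (k3 : INR K * (INR (S T') * a (S T')) <= 2 * (M * Bv)).
  { assert (INR K * (INR (S T') * a (S T')) <= INR K * (2 * INR (S T' - S K) * a (S T'))).
    { apply Rmult_le_compat_l; [apply pos_INR|]. apply Rmult_le_compat_r; [apply a0|lra]. }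
    lra. }
  unfold Rdist. rewrite (Hk (S T')).
  replace (psum a (S T') - INR (S T') * a (S T') - (psum a (S T') + k (S T')))
    with (- (INR (S T') * a (S T') + k (S T'))) by ring.
  rewrite Rabs_Ropp, Rabs_right.
  2:{ specialize (k0 (S T')). assert (0 <= INR (S T') * a (S T')) by (apply Rmult_le_pos; [apply pos_INR|apply a0]). lra. }
  assert (KP : 0 < INR K) by (unfold K; apply lt_0_INR; lia).
  apply (Rmult_lt_reg_l (INR K)); auto. nra.
Qed.

Lemma vertex_nbrs d h x n : is_vertex d h x -> In n (nbrs d h x) -> is_vertex d h n.
Proof.
  intros [Lx Fx] Hn. unfold nbrs, children in Hn. apply in_app_or in Hn as [Hn|Hn].
  - destruct x as [|a p] using rev_ind; [destruct Hn|]. rewrite parent_app in Hn.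
    destruct Hn as [<-|[]]. rewrite List.length_app in Lx. simpl in Lx.
    split; [lia|]. apply Forall_app in Fx; tauto.
  - destruct (Nat.ltb_spec (length x) h); [|destruct Hn].
    apply in_map_iff in Hn as [i [<- Hi]]. apply in_seq in Hi.
    split; [rewrite List.length_app; simpl; lia|]. apply Forall_app; split; auto.
  constructor; auto; lia. Qed.

Lemma deg_pos d h x : (1 <= d)%nat -> (1 <= h)%nat -> is_vertex d h x -> (0 < deg d h x)%nat.
Proof.
  intros Hd Hh [Lx _]. unfold deg, nbrs, children. rewrite List.length_app.
  destruct x as [|a p] using rev_ind.
  - simpl. destruct (Nat.ltb_spec 0 h); [|lia]. rewrite length_map, length_seq; lia.
  - rewrite parent_app. simpl; lia.
Qed.

Section Avg.
End Avg.

Lemma avg_ext d h f g x : (forall n, In n (nbrs d h x) -> f n = g n) -> avg d h f x = avg d h g x.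
Proof. intros H; unfold avg; now rewrite (sumR_map_ext _ _ _ H). Qed.

Lemma avg_const d h c x : (0 < deg d h x)%nat -> avg d h (fun _ => c) x = c.
Proof. intros H; unfold avg. rewrite sumR_map_const. fold (deg d h x).
  apply lt_0_INR in H. field. lra. Qed.

Lemma avg_lin d h a b f g x : avg d h (fun n => a * f n + b * g n) x = a * avg d h f x + b * avg d h g x.
Proof. unfold avg. rewrite sumR_map_plus, !sumR_map_scal. ring. Qed.

Lemma avg_le d h f g x : (0 < deg d h x)%nat -> (forall n, In n (nbrs d h x) -> f n <= g n) -> avg d h f x <= avg d h g x.
Proof. intros H L; unfold avg. apply Rmult_le_compat_l.
  - apply Rlt_le, Rinv_0_lt_compat, lt_0_INR; auto.
  - apply sumR_map_le; auto. Qed.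

Fixpoint Uf d h y (t : nat) (x : list nat) : R :=
  match t with
  | O => if vdec x y then 0 else 1
  | S t' => if vdec x y then 0 else avg d h (Uf d h y t') x
  end.

Fixpoint KH d h y (Hh : list nat -> R) (t : nat) (x : list nat) : R :=
  match t with
  | O => Hh x
  | S t' => if vdec x y then 0 else avg d h (KH d h y Hh t') x
  end.

Lemma hit_S d h y t x : hit_prob d h y (S t) x = if vdec x y then 0 else avg d h (hit_prob d h y t) x.
Proof. reflexivity. Qed.

Lemma framework d h y (Hh : list nat -> R) M u :
  (1 <= d)%nat -> (1 <= h)%nat -> is_vertex d h u ->
  Hh y = 0 ->
  (forall x, is_vertex d h x -> x <> y -> Hh x = 1 + avg d h Hh x) ->
  (forall x, is_vertex d h x -> 0 <= Hh x <= M) ->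
  infinite_sum (fun t => INR t * hit_prob d h y t u) (Hh u).
Proof.
  intros Hd Hh1 Vu Hy Hharm Hb.
  set (V := is_vertex d h).
  assert (DP : forall x, V x -> (0 < deg d h x)%nat) by (intros; apply deg_pos; auto).
  assert (VN : forall x n, V x -> In n (nbrs d h x) -> V n) by (intros; eapply vertex_nbrs; eauto).
  assert (L1 : forall t x, V x -> 0 <= hit_prob d h y t x /\ 0 <= Uf d h y t x).
  { induction t; intros x Vx.
    - simpl. destruct (vdec x y); lra.
    - rewrite hit_S. change (Uf d h y (S t) x) with (if vdec x y then 0 else avg d h (Uf d h y t) x).
      destruct (vdec x y); [lra|]. split.
      + rewrite <- (avg_const d h 0 x (DP x Vx)). apply avg_le; auto.
        intros z Hz; apply (IHt z (VN _ _ Vx Hz)).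
      + rewrite <- (avg_const d h 0 x (DP x Vx)). apply avg_le; auto.
        intros z Hz; apply (IHt z (VN _ _ Vx Hz)). }
  assert (L2 : forall t x, V x -> hit_prob d h y (S t) x = Uf d h y t x - Uf d h y (S t) x).
  { induction t; intros x Vx.
    - rewrite hit_S. simpl Uf. destruct (vdec x y); [lra|].
      rewrite (avg_ext d h _ (fun n => 1 * (fun _ => 1) n + (-1) * Uf d h y 0 n)).
      2:{ intros z _. simpl. destruct (vdec z y); lra. }
      rewrite avg_lin, avg_const by auto. change (Uf d h y 0) with (fun x0 : list nat => if vdec x0 y then 0 else 1). ring.
    - rewrite hit_S. change (Uf d h y (S (S t)) x) with (if vdec x y then 0 else avg d h (Uf d h y (S t)) x).
      change (Uf d h y (S t) x) with (if vdec x y then 0 else avg d h (Uf d h y t) x).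
      destruct (vdec x y); [lra|].
      rewrite (avg_ext d h _ (fun n => 1 * Uf d h y t n + (-1) * Uf d h y (S t) n)).
      2:{ intros z Hz. rewrite IHt by eauto. ring. }
      rewrite avg_lin. ring. }
  assert (L4 : forall T x, V x -> KH d h y Hh T x = Uf d h y T x + KH d h y Hh (S T) x).
  { induction T; intros x Vx.
    - simpl. destruct (vdec x y); [subst; lra|]. apply Hharm; auto.
    - change (KH d h y Hh (S (S T)) x) with (if vdec x y then 0 else avg d h (KH d h y Hh (S T)) x).
      simpl. destruct (vdec x y); [lra|].
      rewrite (avg_ext d h (KH d h y Hh T) (fun n => 1 * Uf d h y T n + 1 * KH d h y Hh (S T) n)).
      2:{ intros z Hz. rewrite IHT by eauto. ring. }
      rewrite avg_lin. rewrite !Rmult_1_l. reflexivity. }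
  assert (L5 : forall T x, V x -> Hh x = psum (fun s => Uf d h y s x) T + KH d h y Hh T x).
  { induction T; intros x Vx; [simpl; lra|]. simpl psum. rewrite IHT, L4 by auto. ring. }
  assert (L6 : forall T x, V x -> 0 <= KH d h y Hh T x /\ KH d h y Hh (S T) x <= M * Uf d h y T x).
  { induction T; intros x Vx.
    - simpl. split; [apply Hb; auto|]. destruct (vdec x y); [lra|].
      rewrite Rmult_1_r, <- (avg_const d h M x (DP x Vx)). apply avg_le; auto.
      intros z Hz; apply (Hb z (VN _ _ Vx Hz)).
    - split.
      + simpl. destruct (vdec x y); [lra|].
        rewrite <- (avg_const d h 0 x (DP x Vx)). apply avg_le; auto.
        intros z Hz; apply (IHT z (VN _ _ Vx Hz)).
      + change (KH d h y Hh (S (S T)) x) with (if vdec x y then 0 else avg d h (KH d h y Hh (S T)) x).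
        change (Uf d h y (S T) x) with (if vdec x y then 0 else avg d h (Uf d h y T) x).
        destruct (vdec x y); [lra|].
        replace (M * avg d h (Uf d h y T) x) with (avg d h (fun n => M * Uf d h y T n + 0 * Uf d h y T n) x)
          by (rewrite avg_lin; ring).
        apply avg_le; auto. intros z Hz. pose proof (IHT z (VN _ _ Vx Hz)). lra. }
  assert (L8 : forall T, sum_f_R0 (fun t => INR t * hit_prob d h y t u) T
               = psum (fun s => Uf d h y s u) T - INR T * Uf d h y T u).
  { induction T.
    - simpl. lra.
    - rewrite tech5, IHT, L2 by auto. simpl psum. rewrite S_INR. ring. }
  intros eps Heps.
  assert (M0 : 0 <= M) by (specialize (Hb u Vu); lra).
  assert (A1 : forall n, 0 <= Uf d h y n u) by (intros n; apply L1; auto).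
  assert (A2 : forall n, Uf d h y (S n) u <= Uf d h y n u).
  { intros n. pose proof (L2 n u Vu). pose proof (L1 (S n) u Vu). lra. }
  assert (A3 : forall T, Hh u = psum (fun s => Uf d h y s u) T + KH d h y Hh T u) by (intros T; apply L5; auto).
  assert (A4 : forall T, 0 <= KH d h y Hh T u) by (intros T; apply L6; auto).
  assert (A5 : forall T, KH d h y Hh (S T) u <= M * Uf d h y T u) by (intros T; apply L6; auto).
  destruct (anal (fun s => Uf d h y s u) (fun T => KH d h y Hh T u) (Hh u) M A1 A2 A3 A4 A5 M0 eps Heps)
    as [N HN].
  exists N. intros T HT. rewrite L8. auto.
Qed.

Theorem mainTheorem9 (d h : nat) (u v : list nat) :
  (1 <= d)%nat -> (1 <= h)%nat ->
  is_vertex d h u -> is_vertex d h v ->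
  is_hitting_time d h u v
    (f_poly (h - length (lca u v)) (INR d) - f_poly (h - length u) (INR d)
     + g_poly h (length v) (INR d) - g_poly h (length (lca u v)) (INR d)).
Proof.
  intros Hd Hh Vu Vv.
  assert (Ed : 1 <= INR d) by (apply (le_INR 1); lia).
  assert (C1 : forall i, 1 <= INR d ^ i) by (intros; apply pow_R1_Rle; auto).
  assert (C2 : forall i, 1 <= INR d ^ (h - i)) by (intros; apply pow_R1_Rle; auto).
  unfold is_hitting_time. rewrite !f_Q, !g_Q.
  change (Q (fun i => INR d ^ i) (h - length (lca u v)) - Q (fun i => INR d ^ i) (h - length u) +
     Q (fun i => INR d ^ (h - i)) (length v) - Q (fun i => INR d ^ (h - i)) (length (lca u v)))
    with (Hfun d h v u).
  apply is_series_Reals.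
  apply (framework d h v (Hfun d h v) (Q (fun i => INR d ^ i) h + Q (fun i => INR d ^ (h - i)) h) u Hd Hh Vu).
  - unfold Hfun, HL. rewrite prefix_lca by apply prefix_refl. ring.
  - intros x Vx Hxv. pose proof (harm d h v x Hd Hh Vv Vx Hxv) as E.
    pose proof (deg_pos d h x Hd Hh Vx) as P. apply lt_0_INR in P.
    unfold avg. rewrite <- E. field. lra.
  - intros x [Lx _]. destruct Vv as [Lv _].
    pose proof (lca_len_l x v). pose proof (lca_len_r x v).
    unfold Hfun, HL.
    pose proof (Q_mono (fun i => INR d ^ i) (h - length x) (h - length (lca x v)) C1 ltac:(lia)).
    pose proof (Q_mono (fun i => INR d ^ i) (h - length (lca x v)) h C1 ltac:(lia)).
    pose proof (Q_nonneg (fun i => INR d ^ i) (h - length x) C1).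
    pose proof (Q_mono _ (length (lca x v)) (length v) C2 ltac:(lia)).
    pose proof (Q_mono _ (length v) h C2 ltac:(lia)).
    pose proof (Q_nonneg _ (length (lca x v)) C2).
    split; lra.
Qed.
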